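(* Let $k\ge1$, $A,B_1,\dots,B_k,C\in\mathbb{C}^{r\times r}$ with $C+mI$ invertible for all $m\ge0$. Fix $i$ and $n\ge1$ and suppose $B_i+mI$ is invertible for all $m\ge0$. Then $$F_{\mathcal D}[B_i+nI]=F_{\mathcal D}+x_iA\Big[\sum_{n_1=1}^nF_{\mathcal D}[A+I,\,B_i+n_1I,\,C+I]\Big]C^{-1}.$$ Furthermore, if $B_i-n_1I$ is invertible for $0\le n_1\le n$, then $$F_{\mathcal D}[B_i-nI]=F_{\mathcal D}-x_iA\Big[\sum_{n_1=0}^{n-1}F_{\mathcal D}[A+I,\,B_i-n_1I,\,C+I]\Big]C^{-1}.$$
   Context: For $M\in\mathbb{C}^{r\times r}$: $(M)_0=I$, $(M)_m=M(M+I)\cdots(M+(m-1)I)$, $(M)^{-1}_m=((M)_m)^{-1}$. $$F_{\mathcal D}=F_{\mathcal D}[A,B_1,\dots,B_k;C;x_1,\dots,x_k]=\sum_{m_1,\dots,m_k\ge0}(A)_{m_1+\cdots+m_k}\prod_{j=1}^k(B_j)_{m_j}\,(C)^{-1}_{m_1+\cdots+m_k}\prod_{j=1}^k\frac{x_j^{m_j}}{m_j!},$$ $x_j$ scalar variables, matrix products in order of increasing index; identities are of formal power series in the $x_j$. $F_{\mathcal D}[\dots]$ lists only the shifted parameters, all others unchanged. *)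

(* Defs.v *)
From HB Require Import structures.
From mathcomp Require Import all_boot all_order all_algebra.
Set Implicit Arguments. Unset Strict Implicit. Unset Printing Implicit Defensive.
Import Order.TTheory GRing.Theory Num.Theory.
Local Open Scope ring_scope.

Section FD.
Variables (K : numClosedFieldType) (r k : nat).

Definition poch (M : 'M[K]_r) (m : nat) : 'M[K]_r :=
  \prod_(j < m) (M + (j%:R)%:M).

(* Formal power series in x_1..x_k with matrix coefficients,
   represented by their coefficient function on multi-indices. *)
Definition mseries := ('I_k -> nat) -> 'M[K]_r.

Definition msum (m : 'I_k -> nat) : nat := \sum_(j < k) m j.

Definition FD (A : 'M[K]_r) (B : 'I_k -> 'M[K]_r) (C : 'M[K]_r) : mseries :=
  fun m =>
    ((\prod_(j < k) (m j)`!)%:R)^-1 *: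
      (poch A (msum m) *m (\prod_(j < k) poch (B j) (m j))
        *m invmx (poch C (msum m))).

Definition setB (B : 'I_k -> 'M[K]_r) (i : 'I_k) (M : 'M[K]_r) : 'I_k -> 'M[K]_r :=
  fun j => if j == i then M else B j.

Definition setm (m : 'I_k -> nat) (i : 'I_k) (p : nat) : 'I_k -> nat :=
  fun j => if j == i then p else m j.

Definition xmul (i : 'I_k) (F : mseries) : mseries :=
  fun m => if m i is p.+1 then F (setm m i p) else 0.

Definition smulL (A : 'M[K]_r) (F : mseries) : mseries := fun m => A *m F m.
Definition smulR (F : mseries) (C : 'M[K]_r) : mseries := fun m => F m *m C.
Definition sadd (F G : mseries) : mseries := fun m => F m + G m.
Definition ssub (F G : mseries) : mseries := fun m => F m - G m.

End FD.

(* Main.v *)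
Require Import Defs.
From HB Require Import structures.
From mathcomp Require Import all_boot all_order all_algebra.
From Stdlib Require Import FunctionalExtensionality.
Set Implicit Arguments. Unset Strict Implicit. Unset Printing Implicit Defensive.
Import Order.TTheory GRing.Theory Num.Theory.
Local Open Scope ring_scope.

Section H.
Variables (K : numClosedFieldType) (r : nat).
Implicit Types (M X Y Z : 'M[K]_r).

Lemma smx_nat (a b : nat) : ((a + b)%:R)%:M = (a%:R)%:M + (b%:R)%:M :> 'M[K]_r.
Proof. by rewrite natrD raddfD. Qed.

Lemma poch_succ M p : poch M p.+1 = M * poch (M + 1%:M) p.
Proof.
rewrite /poch big_ord_recl /= raddf0 addr0; congr (_ * _).
apply: eq_bigr => j _; rewrite /bump /= add1n -addn1 smx_nat addrA.
by rewrite [_ + 1%:M]addrAC.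
Qed.

Lemma poch_recr M p : poch M p.+1 = poch M p * (M + (p%:R)%:M).
Proof. by rewrite /poch big_ord_recr. Qed.

Lemma comm_poch M X p : GRing.comm X M -> (forall c : K, GRing.comm X c%:M) ->
  GRing.comm X (poch M p).
Proof.
move=> h1 h2; apply: commr_prod => j _; apply: commrD => //.
Qed.

Lemma poch_diff M p :
  poch (M + 1%:M) p.+1 = poch M p.+1 + (p.+1)%:R *: poch (M + 1%:M) p.
Proof.
rewrite poch_recr poch_succ.
have hc : GRing.comm M (poch (M + 1%:M) p).
  apply: comm_poch; last by move=> c; rewrite /GRing.comm -!mulmxE scalar_mxC.
  by apply: commrD; [exact: commr_refl|rewrite /GRing.comm -!mulmxE scalar_mxC].
have -> : M + 1%:M + (p%:R)%:M = M + ((p.+1)%:R)%:M.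
  by rewrite -addrA -natr1 raddfD [(_%:M + 1%:M)]addrC.
rewrite mulrDr hc; congr (_ + _).
by rewrite -mulmxE scalar_mxC mul_scalar_mx.
Qed.

Lemma poch_unit M n : (forall j, (j < n)%N -> M + (j%:R)%:M \in unitmx) ->
  poch M n \in unitmx.
Proof.
elim: n => [|n IH] h; first by rewrite /poch big_ord0 unitmx1.
rewrite poch_recr -mulmxE unitmx_mul IH ?h //.
by move=> j hj; apply: h; apply: ltnW.
Qed.

Lemma invmxMu X Y : X \in unitmx -> Y \in unitmx ->
  invmx (X *m Y) = invmx Y *m invmx X.
Proof.
move=> hX hY.
have hXY : X *m Y \in unitmx by rewrite unitmx_mul hX hY.
rewrite -[RHS](mulmxK hXY) mulmxA -[invmx Y *m invmx X *m X]mulmxA mulVmx //.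
by rewrite mulmx1 mulVmx // mul1mx.
Qed.


Definition Gi k (i : 'I_k) (F : 'I_k -> 'M[K]_r) X := fun j => if j == i then X else F j.

Lemma prod_const k (i : 'I_k) F X Y (s : seq 'I_k) : i \notin s ->
  \prod_(j <- s) Gi i F X j = \prod_(j <- s) Gi i F Y j.
Proof.
move=> hi; apply: eq_big_seq => j hj; rewrite /Gi.
by case: eqP hj hi => // -> ->.
Qed.

Lemma prod_lin k (i : 'I_k) F X1 X2 X3 (c : K) (s : seq 'I_k) :
  uniq s -> i \in s -> X1 = X2 + c *: X3 ->
  \prod_(j <- s) Gi i F X1 j = \prod_(j <- s) Gi i F X2 j + c *: \prod_(j <- s) Gi i F X3 j.
Proof.
move=> + + hX; elim: s => [|a s IH] //= /andP [has us].
rewrite !big_cons in_cons => hi.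
have [ea|na] := eqVneq a i.
  subst a; rewrite {1 3 5}/Gi eqxx.
  rewrite (prod_const _ _ X3 has) (prod_const _ X2 X3 has) hX mulrDl.
  by rewrite -!mulmxE scalemxAl.
rewrite {1 3 5}/Gi (negPf na) IH //; last by move: hi; rewrite eq_sym (negPf na).
by rewrite mulrDr -!mulmxE scalemxAr.
Qed.


Lemma msum_setm k (m : 'I_k -> nat) i p : m i = p.+1 -> msum m = (msum (setm m i p)).+1.
Proof.
move=> e; rewrite /msum (bigD1 i) //= [in RHS](bigD1 i) //= /setm eqxx e addSn.
by do 2 f_equal; apply: eq_bigr => j /negPf ->.
Qed.

Lemma fact_setm k (m : 'I_k -> nat) i p : m i = p.+1 ->
  (\prod_(j < k) (m j)`! = p.+1 * \prod_(j < k) (setm m i p j)`!)%N.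
Proof.
move=> e; rewrite (bigD1 i) //= [in RHS](bigD1 i) //= /setm eqxx e factS -mulnA.
congr (_ * (_ * _))%N; apply: eq_bigr => j /negPf ->; done.
Qed.

Lemma FD_step k A (B : 'I_k -> 'M[K]_r) C i (hC : forall m : nat, C + (m%:R)%:M \in unitmx)
  (m : 'I_k -> nat) :
  FD A (setB B i (B i + 1%:M)) C m = FD A B C m +
  (if m i is p.+1 then A *m FD (A + 1%:M) (setB B i (B i + 1%:M)) (C + 1%:M) (setm m i p) *m invmx C
   else 0).
Proof.
case e: (m i) => [|p].
  rewrite addr0 /FD; congr (_ *: (_ *m _ *m _)); apply: eq_bigr => j _.
  by rewrite /setB; case: eqP => // ->; rewrite e /poch !big_ord0.
set F := fun j => poch (B j) (m j).
have e1 : \prod_(j < k) poch (setB B i (B i + 1%:M) j) (m j) = \prod_(j < k) Gi i F (poch (B i + 1%:M) p.+1) j.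
  by apply: eq_bigr => j _; rewrite /setB /Gi /F; case: eqP => // ->; rewrite e.
have e2 : \prod_(j < k) poch (B j) (m j) = \prod_(j < k) Gi i F (poch (B i) p.+1) j.
  by apply: eq_bigr => j _; rewrite /Gi /F; case: eqP => // ->; rewrite e.
have e3 : \prod_(j < k) poch (setB B i (B i + 1%:M) j) (setm m i p j) = \prod_(j < k) Gi i F (poch (B i + 1%:M) p) j.
  by apply: eq_bigr => j _; rewrite /setB /setm /Gi /F; case: eqP.
have e4 := @prod_lin k i F _ _ _ _ (index_enum 'I_k) (index_enum_uniq _) (mem_index_enum i) (poch_diff (B i) p).
rewrite /FD e1 e2 e3 e4 (fact_setm e) (msum_setm e).
move: (msum _) (\prod_(j < k) Gi i F (poch (B i) p.+1) j) (\prod_(j < k) Gi i F (poch (B i + 1%:M) p) j)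
  (\prod_(j < k) (setm m i p j)`!)%N => s P0 P f.
rewrite mulmxDr mulmxDl scalerDr; congr (_ + _).
have hu : poch (C + 1%:M) s \in unitmx.
  apply: poch_unit => j _.
  have -> : (C + 1%:M) + (j%:R)%:M = C + ((j.+1)%:R)%:M.
    by rewrite -addrA -natr1 raddfD [(_%:M + 1%:M)]addrC.
  exact: hC.
have hC0 : C \in unitmx by move: (hC 0%N); rewrite raddf0 addr0.
rewrite !poch_succ -!mulmxE invmxMu // natrM invfM.
rewrite !mulmxA; do 5 rewrite -?scalemxAl -?scalemxAr; rewrite !scalerA !mulmxA.
congr (_ *: _).
have hp : (p.+1)%:R != 0 :> K by rewrite pnatr_eq0.
by rewrite mulrAC mulVf // mul1r.
Qed.


Lemma setB_same k (B : 'I_k -> 'M[K]_r) i X Y : setB (setB B i X) i Y = setB B i Y.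
Proof. by apply: functional_extensionality => j; rewrite /setB; case: eqP. Qed.

Lemma setB_at k (B : 'I_k -> 'M[K]_r) i X : setB B i X i = X.
Proof. by rewrite /setB eqxx. Qed.

Lemma setB_id k (B : 'I_k -> 'M[K]_r) i : setB B i (B i) = B.
Proof. by apply: functional_extensionality => j; rewrite /setB; case: eqP => // ->. Qed.

End H.

Theorem mainTheorem13 (K : numClosedFieldType) (r k : nat) (hk : (0 < k)%N)
  (A : 'M[K]_r) (B : 'I_k -> 'M[K]_r) (C : 'M[K]_r)
  (hC : forall m : nat, C + (m%:R)%:M \in unitmx)
  (i : 'I_k) (n : nat) (hn : (0 < n)%N)
  (hB : forall m : nat, B i + (m%:R)%:M \in unitmx) :
  (FD A (setB B i (B i + (n%:R)%:M)) C =
   sadd (FD A B C)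
     (xmul i (smulR (smulL A
        (fun m => \sum_(1 <= n1 < n.+1)
           FD (A + 1%:M) (setB B i (B i + (n1%:R)%:M)) (C + 1%:M) m))
        (invmx C))))
  /\
  ((forall n1 : nat, (n1 <= n)%N -> B i - (n1%:R)%:M \in unitmx) ->
   FD A (setB B i (B i - (n%:R)%:M)) C =
   ssub (FD A B C)
     (xmul i (smulR (smulL A
        (fun m => \sum_(0 <= n1 < n)
           FD (A + 1%:M) (setB B i (B i - (n1%:R)%:M)) (C + 1%:M) m))
        (invmx C)))).
Proof.
split; last move=> _; apply: functional_extensionality => m;
  rewrite /sadd /ssub /xmul /smulR /smulL; clear hn hB hk.
- elim: n => [|n IH].
    rewrite raddf0 addr0 setB_id.
    by case: (m i) => [|p]; rewrite ?addr0 // big_geq // mulmx0 mul0mx addr0.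
  set B' := setB B i (B i + (n%:R)%:M).
  have eB : setB B i (B i + ((n.+1)%:R)%:M) = setB B' i (B' i + 1%:M).
    by rewrite /B' setB_same setB_at -natr1 raddfD addrA.
  rewrite eB FD_step // IH -eB.
  by case: (m i) => [|p]; rewrite ?addr0 // (big_nat_recr n.+1) //= mulmxDr mulmxDl addrA.
- elim: n => [|n IH].
    rewrite raddf0 subr0 setB_id.
    by case: (m i) => [|p]; rewrite ?subr0 // big_geq // mulmx0 mul0mx subr0.
  set B' := setB B i (B i - ((n.+1)%:R)%:M).
  have eB : setB B i (B i - (n%:R)%:M) = setB B' i (B' i + 1%:M).
    by rewrite /B' setB_same setB_at -natr1 raddfD opprD addrA subrK.
  have h := @FD_step K r k A B' C i hC m; rewrite -eB IH in h.
  case: (m i) h => [|p] h.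
    by move: h; rewrite !subr0 !addr0.
  by rewrite (big_nat_recr n) //= mulmxDr mulmxDl opprD addrA h addrK.
Qed.
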